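(* Let $R=(r_{i,j})_{i,j=0}^{n-1}$ be a complex Hermitian positive definite matrix, and let $0\le s<d\le n-1$. Let $M={}^0R^{s,d}$ be the $n\times n$ matrix with entries $M_{i,j}=r_{i,j}$ if $s\le i,j\le d$ and $M_{i,j}=0$ otherwise. Then for all $s\le k<l\le d$, the quantities $p^M_{k,l},q^M_{k,l},a^M_{k,l},a'^M_{k,l},v^M_{k,l},v'^M_{k,l}$ obtained by running the generalized reflection coefficient recursion on $M$ are well defined and $$\big(p^M_{k,l},q^M_{k,l},a^M_{k,l},a'^M_{k,l},v^M_{k,l},v'^M_{k,l}\big)=\big(p^R_{k,l},q^R_{k,l},a^R_{k,l},a'^R_{k,l},v^R_{k,l},v'^R_{k,l}\big).$$
   Context: Generalized reflection coefficient recursion for a complex $n\times n$ matrix $M$ (indices $0,\dots,n-1$; $e_0,\dots,e_{n-1}$ the canonical basis column vectors of $\mathbb{C}^n$): set $p^M_{k,k}=q^M_{k,k}=e_k$ for all $k$; define $v^M_{k,l}:=(q^M_{k,l})^TMe_l$ and $v'^M_{k,l}:=(p^M_{k,l})^TMe_k$; and for $0\le k<l\le n-1$, recursively in $l-k$, $a^M_{k,l}=\dfrac{(p^M_{k,l-1})^TMe_l}{v^M_{k+1,l}}$, $a'^M_{k,l}=\dfrac{(q^M_{k+1,l})^TMe_k}{v'^M_{k,l-1}}$, $p^M_{k,l}=p^M_{k,l-1}-a^M_{k,l}q^M_{k+1,l}$, $q^M_{k,l}=q^M_{k+1,l}-a'^M_{k,l}p^M_{k,l-1}$ (the quantities are well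 defined when the denominators involved are nonzero; for Hermitian positive definite $M$ they are positive reals). The superscript $R$ denotes the same quantities computed for $M=R$. *)

(* Defs.v *)
From HB Require Import structures.
From mathcomp Require Import all_boot all_order all_algebra.
From mathcomp Require Import complex.
From mathcomp Require Import reals.
Set Implicit Arguments. Unset Strict Implicit. Unset Printing Implicit Defensive.
Import Order.TTheory GRing.Theory Num.Theory.
Local Open Scope ring_scope.

Section GRC.
Variable C : numClosedFieldType.
Variable n : nat.

Definition evec (k : nat) : 'cV[C]_n := \col_(i < n) ((i : nat) == k)%:R.

Definition bil (x : 'cV[C]_n) (M : 'M[C]_n) (y : 'cV[C]_n) : C :=
  (x^T *m M *m y) 0 0.

(* pq M dd k = (p^M_{k,k+dd}, q^M_{k,k+dd}), defined by recursion on dd = l - k.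
   Division is MathComp's total division (x / 0 = 0); well-definedness
   (nonzero denominators) is asserted separately in the theorem. *)
Fixpoint pq (M : 'M[C]_n) (dd k : nat) : 'cV[C]_n * 'cV[C]_n :=
  match dd with
  | 0 => (evec k, evec k)
  | dd'.+1 =>
      let l := (k + dd'.+1)%N in
      let p1 := (pq M dd' k).1 in        (* p_{k,l-1} *)
      let q2 := (pq M dd' k.+1).2 in     (* q_{k+1,l} *)
      let a  := bil p1 M (evec l) / bil q2 M (evec l) in
      let a' := bil q2 M (evec k) / bil p1 M (evec k) in
      (p1 - a *: q2, q2 - a' *: p1)
  end.

Definition rc_p (M : 'M[C]_n) (k l : nat) : 'cV[C]_n := (pq M (l - k) k).1.
Definition rc_q (M : 'M[C]_n) (k l : nat) : 'cV[C]_n := (pq M (l - k) k).2.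
Definition rc_v (M : 'M[C]_n) (k l : nat) : C := bil (rc_q M k l) M (evec l).
Definition rc_v' (M : 'M[C]_n) (k l : nat) : C := bil (rc_p M k l) M (evec k).
Definition rc_a (M : 'M[C]_n) (k l : nat) : C :=
  bil (rc_p M k l.-1) M (evec l) / rc_v M k.+1 l.
Definition rc_a' (M : 'M[C]_n) (k l : nat) : C :=
  bil (rc_q M k.+1 l) M (evec k) / rc_v' M k l.-1.

Definition rc_step_defined (M : 'M[C]_n) (k l : nat) : Prop :=
  rc_v M k.+1 l != 0 /\ rc_v' M k l.-1 != 0.

Definition is_hermitian_mx (A : 'M[C]_n) : Prop :=
  forall i j : 'I_n, A j i = (A i j)^*.

Definition is_posdef_mx (A : 'M[C]_n) : Prop :=
  forall x : 'cV[C]_n, x != 0 -> 0 < ((map_mx Num.conj x)^T *m A *m x) 0 0.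

Definition trunc_mx (A : 'M[C]_n) (s d : nat) : 'M[C]_n :=
  \matrix_(i < n, j < n)
    if [&& (s <= i)%N, (i <= d)%N, (s <= j)%N & (j <= d)%N] then A i j else 0.

End GRC.

(* Main.v *)
Require Import Defs.
From HB Require Import structures.
From mathcomp Require Import all_boot all_order all_algebra.
From mathcomp Require Import complex.
From mathcomp Require Import reals.
From mathcomp Require Import zify ring.
Import Order.TTheory GRing.Theory Num.Theory.
Local Open Scope ring_scope.

Section L.
Variable C : numClosedFieldType.
Variable n : nat.

Lemma evecE k (i : 'I_n) (j : 'I_1) : evec C n k i j = ((i : nat) == k)%:R.
Proof. by rewrite mxE. Qed.

Lemma bil_row (x : 'cV[C]_n) M y :
  bil x M y = \sum_j (\sum_i x i 0 * M i j) * y j 0.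
Proof.
rewrite /bil !mxE; apply eq_bigr => j _; rewrite !mxE; congr (_ * _).
by apply eq_bigr => i _; rewrite mxE.
Qed.

Lemma bil_evec (x : 'cV[C]_n) M jj (hj : (jj < n)%N) :
  bil x M (evec C n jj) = \sum_i x i 0 * M i (Ordinal hj).
Proof.
rewrite bil_row (bigD1 (Ordinal hj)) //= evecE eqxx mulr1 [X in _ + X]big1 ?addr0 //.
by move=> j hj'; rewrite evecE; case: eqP => // h; [case/eqP: hj'; apply/val_inj | rewrite mulr0].
Qed.

Lemma bilB (x y : 'cV[C]_n) a M z :
  bil (x - a *: y) M z = bil x M z - a * bil y M z.
Proof.
rewrite !bil_row mulr_sumr -sumrB; apply eq_bigr => j _.
have -> : \sum_i (x - a *: y) i 0 * M i j = \sum_i x i 0 * M i j - a * \sum_i y i 0 * M i j.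
  by rewrite mulr_sumr -sumrB; apply eq_bigr => i _; rewrite !mxE; ring.
ring.
Qed.

Definition supp (x : 'cV[C]_n) a b := forall i : 'I_n, ((i < a) || (b < i))%N -> x i 0 = 0.
Definition unit_at (x : 'cV[C]_n) c := forall i : 'I_n, (i : nat) = c -> x i 0 = 1.

Lemma supp_mono x a b a' b' : supp x a b -> (a' <= a)%N -> (b <= b')%N -> supp x a' b'.
Proof. move=> h h1 h2 i hi; apply: h; lia. Qed.

Lemma pq_supp (M : 'M[C]_n) dd : forall k, supp (pq M dd k).1 k (k+dd) /\ supp (pq M dd k).2 k (k+dd)
  /\ unit_at (pq M dd k).1 k /\ unit_at (pq M dd k).2 (k+dd).
Proof.
elim: dd => [|dd IH] k /=.
  rewrite addn0; split; [|split;[|split]] => i hi; rewrite mxE //;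
    first [by rewrite hi eqxx | by have /negbTE -> : (i : nat) != k by lia].
have [s1 [s2 [u1 u2]]] := IH k; have [t1 [t2 [w1 w2]]] := IH k.+1.
split; [|split;[|split]] => i hi; rewrite !mxE.
- rewrite (s1 i) ?(t2 i) ?mulr0 ?subr0 //; lia.
- rewrite (s1 i) ?(t2 i) ?mulr0 ?subr0 //; lia.
- rewrite (u1 i hi) (t2 i) ?mulr0 ?subr0 //; lia.
- rewrite (w2 i) ?(s1 i) ?mulr0 ?subr0 //; lia.
Qed.

Lemma bil_evec_ord (x : 'cV[C]_n) M (j : 'I_n) :
  bil x M (evec C n j) = \sum_i x i 0 * M i j.
Proof. by rewrite (bil_evec _ _ _ (ltn_ord j)); have -> : Ordinal (ltn_ord j) = j by apply/val_inj. Qed.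

Lemma posC (M : 'M[C]_n) (pd : is_posdef_mx M) (x : 'cV[C]_n) a b c (hc : (c < n)%N) :
  (a <= c <= b)%N -> supp x a b -> unit_at x c ->
  (forall j, (a <= j <= b)%N -> j != c -> bil x M (evec C n j) = 0) ->
  bil x M (evec C n c) != 0.
Proof.
move=> hac sx ux orth.
set u := map_mx Num.conj x.
have u0 : u != 0.
  apply/eqP => /matrixP /(_ (Ordinal hc) 0); rewrite !mxE (ux (Ordinal hc) erefl) conjC1 => /eqP.
  by rewrite oner_eq0.
have := pd u u0.
have -> : map_mx Num.conj u = x by apply/matrixP => i j; rewrite !mxE conjCK.
rewrite -/(bil x M u) bil_row (bil_evec _ _ _ hc) (bigD1 (Ordinal hc)) //= [X in _ + X]big1 ?addr0.
  by rewrite !mxE (ux (Ordinal hc) erefl) conjC1 mulr1 => h; rewrite gt_eqF.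
move=> j hj; case: (boolP ((a <= j <= b)%N)) => hab.
  have hjc : (j:nat) != c by apply: contra hj => /eqP h; apply/eqP/val_inj.
  by have := orth j hab hjc; rewrite bil_evec_ord => ->; rewrite mul0r.
by rewrite mxE (sx j) ?conjC0 ?mulr0 //; lia.
Qed.

Lemma pq_orth M (pd : is_posdef_mx M) dd : forall k, (k + dd < n)%N ->
 (forall j, (k < j <= k + dd)%N -> bil (pq M dd k).1 M (evec C n j) = 0) /\
 (forall j, (k <= j < k + dd)%N -> bil (pq M dd k).2 M (evec C n j) = 0).
Proof.
elim: dd => [|dd IH] k hk.
  by split => j hj; exfalso; lia.
have [o1 o2] := IH k (ltac:(lia)). have [r1 r2] := IH k.+1 (ltac:(lia)).
have [s1 [s2 [u1 u2]]] := pq_supp M dd k. have [t1 [t2 [w1 w2]]] := pq_supp M dd k.+1.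
have nzq : bil (pq M dd k.+1).2 M (evec C n (k + dd.+1)) != 0.
  have hc : (k.+1 + dd < n)%N by lia.
  rewrite -addSnnS; apply: (@posC M pd _ k.+1 (k.+1+dd) _ hc) => //; first lia.
  by move=> j hj hjc; apply: r2; lia.
have nzp : bil (pq M dd k).1 M (evec C n k) != 0.
  have hc : (k < n)%N by lia.
  apply: (@posC M pd _ k (k+dd) _ hc) => //; first lia.
  by move=> j hj hjc; apply: o1; lia.
split => j hj /=; rewrite bilB.
  case: (boolP (j == k + dd.+1)) => hj2.
    by rewrite (eqP hj2) divfK // subrr.
  rewrite (o1 j) ?(r2 j) ?mulr0 ?subr0 //; lia.
case: (boolP (j == k)) => hj2.
  by rewrite (eqP hj2) divfK // subrr.
rewrite (r2 j) ?(o1 j) ?mulr0 ?subr0 //; lia.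
Qed.

Lemma bil_trunc (R : 'M[C]_n) s d x j : supp x s d -> (s <= j <= d)%N -> (j < n)%N ->
  bil x (trunc_mx R s d) (evec C n j) = bil x R (evec C n j).
Proof.
move=> sx hj hn; rewrite !(bil_evec _ _ _ hn); apply eq_bigr => i _; rewrite mxE /=.
case: ifP => // hb; rewrite (sx i) ?mul0r //.
case: (boolP ((i < s) || (d < i))%N) => // h; exfalso; move: hb; lia.
Qed.

Lemma eq_pq (R : 'M[C]_n) s d dd : forall k, (s <= k)%N -> (k + dd <= d)%N -> (d < n)%N ->
  pq (trunc_mx R s d) dd k = pq R dd k.
Proof.
elim: dd => [|dd IH] k hs hd hn //=.
have e1 : pq (trunc_mx R s d) dd k = pq R dd k by apply IH; lia.
have e2 : pq (trunc_mx R s d) dd k.+1 = pq R dd k.+1 by apply IH; lia.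
have [s1 [s2 _]] := pq_supp R dd k; have [t1 [t2 _]] := pq_supp R dd k.+1.
have hp1 : supp (pq R dd k).1 s d by apply: supp_mono s1 _ _; lia.
have hq2 : supp (pq R dd k.+1).2 s d by apply: supp_mono t2 _ _; lia.
rewrite e1 e2 !bil_trunc //; lia.
Qed.


Lemma rc_eqs (R : 'M[C]_n) s d k l : (s <= k)%N -> (k <= l)%N -> (l <= d)%N -> (d < n)%N ->
  [/\ rc_p (trunc_mx R s d) k l = rc_p R k l, rc_q (trunc_mx R s d) k l = rc_q R k l,
      rc_v (trunc_mx R s d) k l = rc_v R k l & rc_v' (trunc_mx R s d) k l = rc_v' R k l].
Proof.
move=> h1 h2 h3 h4.
have ep : pq (trunc_mx R s d) (l - k) k = pq R (l - k) k by apply: eq_pq; lia.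
have [s1 [s2 _]] := pq_supp R (l - k) k.
have hp : supp (pq R (l - k) k).1 s d by apply: supp_mono s1 _ _; lia.
have hq : supp (pq R (l - k) k).2 s d by apply: supp_mono s2 _ _; lia.
rewrite /rc_v /rc_v' /rc_p /rc_q ep; split => //; rewrite bil_trunc //; lia.
Qed.

Lemma rc_nz (R : 'M[C]_n) (pd : is_posdef_mx R) k l : (k <= l)%N -> (l < n)%N ->
  rc_v R k l != 0 /\ rc_v' R k l != 0.
Proof.
move=> h1 h2; rewrite /rc_v /rc_v' /rc_p /rc_q.
have [s1 [s2 [u1 u2]]] := pq_supp R (l - k) k.
have [o1 o2] := @pq_orth R pd _ k (ltac:(lia) : (k + (l - k) < n)%N).
have e : (k + (l - k))%N = l by lia.
rewrite e in s1 s2 u2 o1 o2.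
have hk : (k < n)%N by lia.
split.
  apply: (@posC R pd _ k l _ h2) => //; first lia.
  by move=> j hj hjc; apply: o2; lia.
apply: (@posC R pd _ k l _ hk) => //; first lia.
by move=> j hj hjc; apply: o1; lia.
Qed.
End L.

Theorem mainTheorem2 (Rr : realType) (n : nat) (R : 'M[complex Rr]_n) (s d : nat)
  (hR : is_hermitian_mx R) (pdR : is_posdef_mx R) (hsd : (s < d)%N) (hdn : (d < n)%N) :
  let M := trunc_mx R s d in
  forall k l : nat, (s <= k)%N -> (k < l)%N -> (l <= d)%N ->
    rc_step_defined M k l /\
    (rc_p M k l = rc_p R k l /\ rc_q M k l = rc_q R k l /\
     rc_a M k l = rc_a R k l /\ rc_a' M k l = rc_a' R k l /\
     rc_v M k l = rc_v R k l /\ rc_v' M k l = rc_v' R k l).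
Proof.
move=> M k l h1 h2 h3.
have [p1 q1 v1 v'1] := @rc_eqs _ _ R s d _ _ (ltac:(lia) : (s <= k)%N) (ltac:(lia) : (k <= l)%N) h3 hdn.
have [p2 q2 v2 v'2] := @rc_eqs _ _ R s d _ _ (ltac:(lia) : (s <= k)%N) (ltac:(lia) : (k <= l.-1)%N) (ltac:(lia) : (l.-1 <= d)%N) hdn.
have [p3 q3 v3 v'3] := @rc_eqs _ _ R s d _ _ (ltac:(lia) : (s <= k.+1)%N) (ltac:(lia) : (k.+1 <= l)%N) h3 hdn.
have [nz1 _] := @rc_nz _ _ R pdR _ _ (ltac:(lia) : (k.+1 <= l)%N) (ltac:(lia) : (l < n)%N).
have [_ nz2] := @rc_nz _ _ R pdR _ _ (ltac:(lia) : (k <= l.-1)%N) (ltac:(lia) : (l.-1 < n)%N).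
have hp2 : @supp _ _ (rc_p R k l.-1) s d.
  have [s1 _] := @pq_supp _ _ R (l.-1 - k) k; apply: supp_mono s1 _ _; lia.
have hq3 : @supp _ _ (rc_q R k.+1 l) s d.
  have [_ [s2 _]] := @pq_supp _ _ R (l - k.+1) k.+1; apply: supp_mono s2 _ _; lia.
rewrite /rc_step_defined /rc_a /rc_a' /M v3 v'2 p2 q3 p1 q1 v1 v'1 !bil_trunc //; try lia.
Qed.
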